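(* Let $B\neq\emptyset$ be an event (a union of elements of $\Pi$) and let $X|B$ be a conditional gamble. Let $I\subset\mathbb{R}$ be an interval containing the image set $\{X(\omega):\omega\in\Pi,\ \omega\Rightarrow B\}$ of $X|B$, let $\phi:I\to\mathbb{R}$ be convex and $\psi:I\to\mathbb{R}$ be concave. Let $\mu$ be a real-valued uncertainty measure defined on the conditional gambles given $B$ (in particular on $X|B$ and on all gambles to which $\mu$ is applied below), satisfying axioms (M), (T), (PH), and let $\overline{\mu}$ be its conjugate, $\overline{\mu}(Y|B)=-\mu(-Y|B)$. Assume $\mu(X|B)$ is an interior point of $I$. (a) Let $J_\phi=[\phi'_-(\mu(X|B)),\phi'_+(\mu(X|B))]$. If there is $\lambda\in J_\phi$ with $\lambda\ge 0$, then $\mu(\phi(X|B))\ge\phi(\mu(X|B))$. If there is $\lambda\in J_\phi$ with $\lambda\le 0$, then $\overline{\mu}(\phi(X|B))\ge\phi(\mu(X|B))$. (b) Let $J_\psi=[\psi'_+(\mu(X|B)),\psi'_-(\mu(X|B))]$. If there is $\lambda\in J_\psi$ with $\lambda\ge 0$, then $\mu(\psi(X|B))\le\psi(\mu(X|B))$. If there is $\lambda\in J_\psi$ with $\lambda\le 0$, then $\overline{\mu}(\psi(X|B))\le\psi(\mu(X|B))$.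
   Context: $\Pi$ is a partition of the sure event into pairwise disjoint non-impossible events (possibly infinitely many); a gamble is a bounded map $X:\Pi\to\mathbb{R}$. For an event $B\neq\emptyset$ that is a union of elements of $\Pi$, the conditional gamble $X|B$ is the restriction of $X$ to the elements $\omega\in\Pi$ with $\omega\Rightarrow B$; for a real function $f$ defined on its image set, $f(X|B)$ is the conditional gamble $\omega\mapsto f(X(\omega))$ on those $\omega$. Axioms for $\mu$ (for all conditional gambles $X|B,Y|B$): (M) if $X|B\ge Y|B$ then $\mu(X|B)\ge\mu(Y|B)$; (T) $\mu(X+a|B)=\mu(X|B)+a$ for all $a\in\mathbb{R}$; (PH) $\mu(\lambda X|B)=\lambda\mu(X|B)$ for all $\lambda\ge 0$. $f'_+(x)$ and $f'_-(x)$ denote the right and left derivatives of $f$ at $x$. *)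

(* Defs.v *)
From mathcomp Require Import all_boot all_order all_algebra.
From mathcomp Require Import all_classical all_reals all_analysis.
Import Order.TTheory GRing.Theory Num.Theory.
Import numFieldNormedType.Exports.
Local Open Scope ring_scope.
Local Open Scope classical_set_scope.

Set Implicit Arguments.
Unset Strict Implicit.
Unset Printing Implicit Defensive.

Definition bounded_map {T : Type} {R : realType} (X : T -> R) : Prop :=
  exists M : R, forall w, `|X w| <= M.

(* The elements omega of Pi with omega => B are the inhabitants of
   {w : Pi | B w}; a conditional gamble given B is a bounded map on them. *)
Definition cgamble {Pi : Type} {R : realType} (B : set Pi) (X : Pi -> R)
  : {w : Pi | B w} -> R := fun w => X (proj1_sig w).
Arguments cgamble {Pi R} B X _.

Definition axiom_M {Om : Type} {R : realType} (mu : (Om -> R) -> R) : Prop :=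
  forall X Y : Om -> R, bounded_map X -> bounded_map Y ->
    (forall w, Y w <= X w) -> mu Y <= mu X.

Definition axiom_T {Om : Type} {R : realType} (mu : (Om -> R) -> R) : Prop :=
  forall (X : Om -> R) (a : R), bounded_map X ->
    mu (fun w => X w + a) = mu X + a.

Definition axiom_PH {Om : Type} {R : realType} (mu : (Om -> R) -> R) : Prop :=
  forall (X : Om -> R) (l : R), bounded_map X -> 0 <= l ->
    mu (fun w => l * X w) = l * mu X.

Definition conjugate {Om : Type} {R : realType} (mu : (Om -> R) -> R)
  : (Om -> R) -> R := fun Y => - mu (fun w => - Y w).

Definition convex_on {R : realType} (I : interval R) (f : R -> R) : Prop :=
  forall x y t, x \in I -> y \in I -> 0 <= t -> t <= 1 ->
    f (t * x + (1 - t) * y) <= t * f x + (1 - t) * f y.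

Definition concave_on {R : realType} (I : interval R) (f : R -> R) : Prop :=
  forall x y t, x \in I -> y \in I -> 0 <= t -> t <= 1 ->
    t * f x + (1 - t) * f y <= f (t * x + (1 - t) * y).

Definition right_deriv {R : realType} (f : R -> R) (x : R) : R :=
  lim ((fun h : R => (f (x + h) - f x) / h) @ (0 : R)^'+).

Definition left_deriv {R : realType} (f : R -> R) (x : R) : R :=
  lim ((fun h : R => (f (x + h) - f x) / h) @ (0 : R)^'-).

(* Main.v *)
Require Import Defs.
From mathcomp Require Import all_boot all_order all_algebra.
From mathcomp Require Import all_classical all_reals all_analysis.
From mathcomp Require Import ring lra.
Import Order.TTheory GRing.Theory Num.Theory.
Import numFieldNormedType.Exports.
Local Open Scope ring_scope.
Local Open Scope classical_set_scope.

Section Aux.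
Variable R : realType.

Lemma slope3 (I : interval R) (f : R -> R) a b c :
  convex_on I f -> a \in I -> c \in I -> a < b -> b < c ->
  (f b - f a) / (b - a) <= (f c - f a) / (c - a) /\
  (f c - f a) / (c - a) <= (f c - f b) / (c - b).
Proof.
move=> hf aI cI ab bc.
have ca : 0 < c - a by rewrite subr_gt0 (lt_trans ab bc).
have ba : 0 < b - a by rewrite subr_gt0.
have cb : 0 < c - b by rewrite subr_gt0.
set t := (c - b) / (c - a).
have t0 : 0 <= t by rewrite divr_ge0 // ltW.
have t1 : t <= 1 by rewrite ler_pdivrMr // mul1r lerD2l lerN2 ltW.
have := hf a c t aI cI t0 t1.
have -> : t * a + (1 - t) * c = b.
  rewrite /t; field; by rewrite lt0r_neq0.
move=> H.
have H' : f b * (c - a) <= (c - b) * f a + (b - a) * f c.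
  apply: (le_trans (ler_wpM2r (ltW ca) H)); rewrite /t; rewrite le_eqVlt; apply/orP; left; apply/eqP; field; by rewrite lt0r_neq0.
split.
- rewrite ler_pdivrMr // mulrAC ler_pdivlMr //. nra.
- rewrite ler_pdivrMr // mulrAC ler_pdivlMr //. nra.
Qed.

Arguments slope3 {I f a b c}.
Definition q (f : R -> R) (m h : R) := (f (m + h) - f m) / h.

Lemma qE (f : R -> R) (m h : R) : (f m - f (m + h)) / (m - (m + h)) = q f m h.
Proof.
have -> : m - (m + h) = - h by ring.
by rewrite -opprB invrN mulrNN.
Qed.

Lemma qE' (f : R -> R) (m h : R) : (f (m + h) - f m) / (m + h - m) = q f m h.
Proof. by have -> : m + h - m = h by ring. Qed.

Lemma qmono (I : interval R) (f : R -> R) m h1 h2 :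
  convex_on I f -> m \in I -> m + h1 \in I -> m + h2 \in I ->
  h1 != 0 -> h2 != 0 -> h1 <= h2 -> q f m h1 <= q f m h2.
Proof.
move=> hf mI h1I h2I n1 n2; rewrite le_eqVlt => /orP[/eqP -> //|h12].
have [h10|h10] := ltP 0 h1.
  have b1 : m < m + h1 by rewrite ltrDl.
  have b2 : m + h1 < m + h2 by rewrite ltrD2l.
  by have [H _] := slope3 hf mI h2I b1 b2; rewrite !qE' in H.
have h1n : h1 < 0 by rewrite lt_neqAle n1.
have [h20|h20] := ltP h2 0.
  have b1 : m + h1 < m + h2 by rewrite ltrD2l.
  have b2 : m + h2 < m by rewrite gtrDl.
  by have [_ H] := slope3 hf h1I mI b1 b2; rewrite !qE in H.
have h2p : 0 < h2 by rewrite lt_neqAle eq_sym n2.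
have b1 : m + h1 < m by rewrite gtrDl.
have b2 : m < m + h2 by rewrite ltrDl.
have [H1 H2] := slope3 hf h1I h2I b1 b2.
by rewrite -qE -qE'; apply: le_trans H1 H2.
Qed.

Lemma int_ball (I : interval R) m :
  @interior R [set x : R | x \in I] m ->
  exists2 e : R, 0 < e & forall y, `|y| < e -> m + y \in I.
Proof.
move=> /nbhs_ballP[e e0 he]; exists e => // y ye.
apply: he; rewrite -ball_normE /ball_ /=.
have -> : m - (m + y) = - y by ring.
by rewrite normrN.
Qed.


Arguments int_ball {I m}.
Lemma right_cvg (I : interval R) (f : R -> R) m :
  convex_on I f -> @interior R [set x : R | x \in I] m ->
  cvg ((fun h => (f (m + h) - f m) / h) @ (0 : R)^'+).
Proof.
move=> hf hint; have [e e0 he] := int_ball hint.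
have mI : m \in I by have := he 0; rewrite addr0 normr0; apply.
have e2 : 0 < e / 2 by rewrite divr_gt0.
have e2e : e / 2 < e by rewrite ltr_pdivrMr // ltr_pMr // ltr1n.
apply: nondecreasing_at_right_is_cvgr.
- near=> x.
  have xe : x < e by near: x; exact: nbhs_right_lt.
  move=> y z; rewrite !in_itv /= => /andP[y0 yx] /andP[z0 zx] yz.
  apply: (@qmono I) => //.
  + by apply: he; rewrite gtr0_norm // (lt_trans yx xe).
  + by apply: he; rewrite gtr0_norm // (lt_trans zx xe).
  + by rewrite gt_eqF.
  + by rewrite gt_eqF.
- near=> x.
  have xe : x < e by near: x; exact: nbhs_right_lt.
  exists (q f m (- (e / 2))) => z [y] yin <-.
  move: yin; rewrite /= in_itv /= => /andP[y0 yx].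
  apply: (@qmono I) => //.
  + by apply: he; rewrite normrN gtr0_norm.
  + by apply: he; rewrite gtr0_norm // (lt_trans yx xe).
  + by rewrite oppr_eq0 gt_eqF.
  + by rewrite gt_eqF.
  + by rewrite (le_trans _ (ltW y0)) // oppr_le0 ltW.
Unshelve. all: by end_near.
Qed.

Lemma left_cvg (I : interval R) (f : R -> R) m :
  convex_on I f -> @interior R [set x : R | x \in I] m ->
  cvg ((fun h => (f (m + h) - f m) / h) @ (0 : R)^'-).
Proof.
move=> hf hint; have [e e0 he] := int_ball hint.
have mI : m \in I by have := he 0; rewrite addr0 normr0; apply.
have e2 : 0 < e / 2 by rewrite divr_gt0.
have e2e : e / 2 < e by rewrite ltr_pdivrMr // ltr_pMr // ltr1n.
apply: nondecreasing_at_left_is_cvgr.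
- near=> x.
  have xe : - e < x by near: x; apply: nbhs_left_gt; rewrite oppr_lt0.
  move=> y z; rewrite !in_itv /= => /andP[xy y0] /andP[xz z0] yz.
  apply: (@qmono I) => //.
  + by apply: he; rewrite ltr0_norm // ltrNl (lt_trans xe xy).
  + by apply: he; rewrite ltr0_norm // ltrNl (lt_trans xe xz).
  + by rewrite lt_eqF.
  + by rewrite lt_eqF.
- near=> x.
  have xe : - e < x by near: x; apply: nbhs_left_gt; rewrite oppr_lt0.
  exists (q f m (e / 2)) => z [y]; rewrite /= in_itv /= => /andP[xy y0] <-.
  apply: (@qmono I) => //.
  + by apply: he; rewrite ltr0_norm // ltrNl (lt_trans xe xy).
  + by apply: he; rewrite gtr0_norm.
  + by rewrite lt_eqF.
  + by rewrite gt_eqF.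
  + by rewrite (le_trans (ltW y0)) // ltW.
Unshelve. all: by end_near.
Qed.

Lemma right_le (I : interval R) (f : R -> R) (m h : R) :
  convex_on I f -> @interior R [set x : R | x \in I] m ->
  0 < h -> m + h \in I -> right_deriv f m <= q f m h.
Proof.
move=> hf hint h0 hI; have [e e0 he] := int_ball hint.
have mI : m \in I by have := he 0; rewrite addr0 normr0; apply.
apply: limr_le; first exact: (right_cvg _ _ _ hf hint).
near=> y.
have y0 : 0 < y by near: y; exact: nbhs_right_gt.
have yh : y < h by near: y; exact: nbhs_right_lt.
have ye : y < e by near: y; exact: nbhs_right_lt.
apply: (@qmono I) => //.
+ by apply: he; rewrite gtr0_norm.
all: try by rewrite gt_eqF.
all: exact: ltW.
Unshelve. all: by end_near.
Qed.

Lemma left_ge (I : interval R) (f : R -> R) (m h : R) :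
  convex_on I f -> @interior R [set x : R | x \in I] m ->
  h < 0 -> m + h \in I -> q f m h <= left_deriv f m.
Proof.
move=> hf hint h0 hI; have [e e0 he] := int_ball hint.
have mI : m \in I by have := he 0; rewrite addr0 normr0; apply.
apply: limr_ge; first exact: (left_cvg _ _ _ hf hint).
near=> y.
have y0 : y < 0 by near: y; exact: nbhs_left_lt.
have yh : h < y by near: y; exact: nbhs_left_gt.
have ye : - e < y by near: y; apply: nbhs_left_gt; rewrite oppr_lt0.
apply: (@qmono I) => //.
+ by apply: he; rewrite ltr0_norm // ltrNl.
all: try by rewrite lt_eqF.
all: exact: ltW.
Unshelve. all: by end_near.
Qed.


Lemma support_convex (I : interval R) (f : R -> R) (m l x : R) :
  convex_on I f -> @interior R [set x : R | x \in I] m ->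
  left_deriv f m <= l -> l <= right_deriv f m -> x \in I ->
  f m + l * (x - m) <= f x.
Proof.
move=> hf hint hl hr xI.
have qx : q f m (x - m) * (x - m) = f x - f m.
  case: (eqVneq x m) => [->|nz]; first by rewrite !subrr mulr0.
  rewrite /q divfK ?subr_eq0 //.
  by have -> : m + (x - m) = x by ring.
have [xm|xm|->] := ltgtP x m.
- have h0 : x - m < 0 by rewrite subr_lt0.
  have hI : m + (x - m) \in I by have -> : m + (x - m) = x by ring.
  have := left_ge _ _ _ _ hf hint h0 hI => H.
  have := ler_wnM2r (ltW h0) (le_trans H hl); rewrite qx => H2.
  by rewrite -lerBrDl.
- have h0 : 0 < x - m by rewrite subr_gt0.
  have hI : m + (x - m) \in I by have -> : m + (x - m) = x by ring.
  have := right_le _ _ _ _ hf hint h0 hI => H.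
  have := ler_wpM2r (ltW h0) (le_trans hr H); rewrite qx => H2.
  by rewrite -lerBrDl.
- by rewrite subrr mulr0 addr0.
Qed.

Lemma concave_neg (I : interval R) (f : R -> R) :
  concave_on I f -> convex_on I (fun x => - f x).
Proof.
move=> hf x y t xI yI t0 t1; rewrite !mulrN -opprD lerN2; exact: hf.
Qed.

Lemma deriv_neg_r (I : interval R) (f : R -> R) (m : R) :
  concave_on I f -> @interior R [set x : R | x \in I] m ->
  right_deriv f m = - right_deriv (fun x => - f x) m.
Proof.
move=> hf hint.
have C := right_cvg _ _ _ (concave_neg _ _ hf) hint.
have L := limN (FF := at_right_proper_filter 0) C; rewrite /right_deriv -L; congr lim; f_equal.
by apply/funext => h /=; rewrite -mulNr opprB opprK addrC.
Qed.

Lemma deriv_neg_l (I : interval R) (f : R -> R) (m : R) :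
  concave_on I f -> @interior R [set x : R | x \in I] m ->
  left_deriv f m = - left_deriv (fun x => - f x) m.
Proof.
move=> hf hint.
have C := left_cvg _ _ _ (concave_neg _ _ hf) hint.
have L := limN (FF := at_left_proper_filter 0) C; rewrite /left_deriv -L; congr lim; f_equal.
by apply/funext => h /=; rewrite -mulNr opprB opprK addrC.
Qed.

Lemma support_concave (I : interval R) (f : R -> R) (m l x : R) :
  concave_on I f -> @interior R [set x : R | x \in I] m ->
  right_deriv f m <= l -> l <= left_deriv f m -> x \in I ->
  f x <= f m + l * (x - m).
Proof.
move=> hf hint hr hl xI.
have := support_convex _ _ _ (- l) _ (concave_neg _ _ hf) hint.
rewrite (deriv_neg_r _ _ _ hf hint) (deriv_neg_l _ _ _ hf hint) in hr hl.
move=> /(_ x) H.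
have H1 : left_deriv (fun x0 : R => - f x0) m <= - l by rewrite lerNr.
have H2 : - l <= right_deriv (fun x0 : R => - f x0) m by rewrite lerNl.
have := H H1 H2 xI; lra.
Qed.


Lemma bnd_scale (Om : Type) (Y : Om -> R) (l : R) :
  bounded_map Y -> bounded_map (fun w => l * Y w).
Proof.
move=> [M HM]; exists (`|l| * M) => w; rewrite normrM.
by apply: ler_wpM2l => //; exact: HM.
Qed.

Lemma bnd_neg (Om : Type) (Y : Om -> R) :
  bounded_map Y -> bounded_map (fun w => - Y w).
Proof. by move=> [M HM]; exists M => w; rewrite normrN. Qed.

Lemma mu_aff (Om : Type) (mu : (Om -> R) -> R) (Y : Om -> R) (l c : R) :
  axiom_T mu -> axiom_PH mu -> bounded_map Y -> 0 <= l ->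
  mu (fun w => l * Y w + c) = l * mu Y + c.
Proof.
move=> hT hPH hY l0.
by rewrite (hT (fun w => l * Y w)) ?hPH //; exact: (bnd_scale _ _ l).
Qed.

Lemma bnd_aff (Om : Type) (Y : Om -> R) (l c : R) :
  bounded_map Y -> bounded_map (fun w => l * Y w + c).
Proof.
move=> /(bnd_scale _ _ l) [M HM]; exists (M + `|c|) => w.
by apply: (le_trans (ler_normD _ _)); rewrite lerD2r.
Qed.

End Aux.

Theorem theorem3 (R : realType) (Pi : Type) (B : set Pi) (hB : B !=set0)
  (X : Pi -> R) (hX : bounded_map X)
  (I : interval R) (hI : forall w, B w -> X w \in I)
  (phi psi : R -> R) (hphi : convex_on I phi) (hpsi : concave_on I psi)
  (mu : ({w : Pi | B w} -> R) -> R)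
  (hM : axiom_M mu) (hT : axiom_T mu) (hPH : axiom_PH mu)
  (hint : @interior R [set x : R | x \in I] (mu (cgamble B X))) :
  (bounded_map (fun w => phi (cgamble B X w)) ->
    ((exists l, left_deriv phi (mu (cgamble B X)) <= l
                /\ l <= right_deriv phi (mu (cgamble B X)) /\ 0 <= l) ->
       phi (mu (cgamble B X)) <= mu (fun w => phi (cgamble B X w)))
    /\
    ((exists l, left_deriv phi (mu (cgamble B X)) <= l
                /\ l <= right_deriv phi (mu (cgamble B X)) /\ l <= 0) ->
       phi (mu (cgamble B X)) <= conjugate mu (fun w => phi (cgamble B X w))))
  /\
  (bounded_map (fun w => psi (cgamble B X w)) ->
    ((exists l, right_deriv psi (mu (cgamble B X)) <= l
                /\ l <= left_deriv psi (mu (cgamble B X)) /\ 0 <= l) ->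
       mu (fun w => psi (cgamble B X w)) <= psi (mu (cgamble B X)))
    /\
    ((exists l, right_deriv psi (mu (cgamble B X)) <= l
                /\ l <= left_deriv psi (mu (cgamble B X)) /\ l <= 0) ->
       conjugate mu (fun w => psi (cgamble B X w)) <= psi (mu (cgamble B X)))).
Proof.
have hY : bounded_map (cgamble B X).
  by case: hX => M HM; exists M => w; exact: HM.
have YI : forall w, cgamble B X w \in I by case=> w bw; exact: hI.
move: hint hY YI; set Y := cgamble B X; set m := mu Y => hint hY YI.
split=> hb; split.
- move=> [l [hl [hr l0]]].
  have E : mu (fun w => l * Y w + (phi m - l * m)) = phi m.
    rewrite mu_aff //; rewrite -/m; ring.
  rewrite -{1}E; apply: hM => //; first exact: bnd_aff.
  move=> w; have := support_convex _ _ _ _ _ _ hphi hint hl hr (YI w); lra.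
- move=> [l [hl [hr l0]]]; rewrite /conjugate lerNr.
  have E : mu (fun w => (- l) * Y w + (l * m - phi m)) = - phi m.
    rewrite mu_aff //; last by rewrite oppr_ge0.
    rewrite -/m; ring.
  rewrite -E; apply: hM => //; first exact: bnd_aff.
  exact: bnd_neg.
  move=> w; have := support_convex _ _ _ _ _ _ hphi hint hl hr (YI w); lra.
- move=> [l [hr [hl l0]]].
  have E : mu (fun w => l * Y w + (psi m - l * m)) = psi m.
    rewrite mu_aff //; rewrite -/m; ring.
  rewrite -E; apply: hM => //; first exact: bnd_aff.
  move=> w; have := support_concave _ _ _ _ _ _ hpsi hint hr hl (YI w); lra.
- move=> [l [hr [hl l0]]]; rewrite /conjugate lerNl.
  have E : mu (fun w => (- l) * Y w + (l * m - psi m)) = - psi m.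
    rewrite mu_aff //; last by rewrite oppr_ge0.
    rewrite -/m; ring.
  rewrite -E; apply: hM => //; first exact: bnd_neg.
  exact: bnd_aff.
  move=> w; have := support_concave _ _ _ _ _ _ hpsi hint hr hl (YI w); lra.
Qed.
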